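(* Let $\psi_\pm(x)=\frac{5\pm\sqrt{25-4x}}{2}$ and $\Psi(x)=\frac32\lim_{l\to\infty}5^l\psi_-^{\,l}(x)$. Let $E$ be the set consisting of the empty sequence $\emptyset$ together with all finite sequences $e=(e_1,\dots,e_N)$, $N\ge1$, with $e_j\in\{+,-\}$ and $e_1=+$; write $|e|$ for the length and $\psi_e=\psi_{e_1}\circ\cdots\circ\psi_{e_{|e|}}$, $\psi_\emptyset=\mathrm{id}$. Fix an integer $m_0$ and an initial value $\lambda_{m_0}\in\{2,5,6\}$, and define for $e\in E$ $$\lambda_e=5^{|e|+m_0}\,\Psi(\psi_e(\lambda_{m_0}))\ \text{ if }\lambda_{m_0}\in\{2,5\},\qquad \lambda_e=5^{|e|+m_0+1}\,\Psi(\psi_e(3))\ \text{ if }\lambda_{m_0}=6,$$ and the counting function $\rho_{m_0}(x)=\#\{e\in E:\lambda_e\le x\}$ for $x>0$. Then there exists a continuous, $\log 5$-periodic function $g:\mathbb{R}\to\mathbb{R}$ such that $$\lim_{x\to\infty}\left(\frac{\rho_{m_0}(x)}{x^{\log2/\log5}}-g(\log x)\right)=0.$$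
   Context: These $\lambda_e$ are exactly the eigenvalues of the Laplacian on the Sierpinski gasket (or on the infinite Sierpinski gasket) of eigenfunctions obtained by spectral decimation from a fixed generation of birth $m_0$ and a fixed initial eigenfunction with initial eigenvalue $\lambda_{m_0}$; each such eigenvalue corresponds to a unique eigenfunction extending the fixed initial one. *)

(* Defs.v *)
From Stdlib Require Import Reals Lra ZArith List ClassicalEpsilon.
Open Scope R_scope.

Definition psi_plus (x : R) : R := (5 + sqrt (25 - 4 * x)) / 2.
Definition psi_minus (x : R) : R := (5 - sqrt (25 - 4 * x)) / 2.
Definition psi (b : bool) (x : R) : R := if b then psi_plus x else psi_minus x.

Fixpoint psi_minus_iter (l : nat) (x : R) : R :=
  match l with O => x | S k => psi_minus (psi_minus_iter k x) end.

Definition Psi (x : R) : R :=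
  3 / 2 * epsilon (inhabits 0)
    (fun L => Un_cv (fun l => 5 ^ l * psi_minus_iter l x) L).

(* sign sequences: true = '+', false = '-';
   psi_e = psi_{e1} o ... o psi_{eN} *)
Definition psi_seq (e : list bool) (x : R) : R :=
  fold_right (fun b acc => psi b acc) x e.

Definition inE (e : list bool) : Prop := e = nil \/ exists t, e = true :: t.

Definition lambda_e (m0 : Z) (lam0 : R) (e : list bool) : R :=
  if Req_EM_T lam0 6
  then powerRZ 5 (Z.of_nat (length e) + m0 + 1) * Psi (psi_seq e 3)
  else powerRZ 5 (Z.of_nat (length e) + m0) * Psi (psi_seq e lam0).

Definition count_is (m0 : Z) (lam0 x : R) (n : nat) : Prop :=
  exists l : list (list bool), NoDup l /\ length l = n /\
    forall e, In e l <-> (inE e /\ lambda_e m0 lam0 e <= x).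

Definition rho (m0 : Z) (lam0 x : R) : R :=
  INR (epsilon (inhabits O) (fun n => count_is m0 lam0 x n)).

(* Main.v *)
Require Import Defs.
From Stdlib Require Import Reals Lra Lia ZArith List ClassicalEpsilon FinFun Classical.
Open Scope R_scope.


Lemma sq_facts u : 0 <= u <= 25/4 ->
  0 <= sqrt (25 - 4*u) /\ sqrt (25 - 4*u) * sqrt (25 - 4*u) = 25 - 4*u.
Proof. intros. split. apply sqrt_pos. apply sqrt_sqrt. lra. Qed.

Ltac sq u H := let h := fresh in destruct (sq_facts u H) as [? h]; 
  set (S := sqrt (25 - 4*u)) in *.

Lemma pm_range u : 0 <= u <= 25/4 -> 0 <= psi_minus u <= 5/2.
Proof. intros H. unfold psi_minus. destruct (sq_facts u H) as [A B].
  set (S := sqrt (25 - 4*u)) in *. split; nra. Qed.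

Lemma pp_range u : 0 <= u <= 25/4 -> 5/2 <= psi_plus u <= 5.
Proof. intros H. unfold psi_plus. destruct (sq_facts u H) as [A B].
  set (S := sqrt (25 - 4*u)) in *. split; nra. Qed.

Lemma psi_range c u : 0 <= u <= 5 -> 0 <= psi c u <= 5.
Proof. intros H. destruct c; simpl.
  - destruct (pp_range u); lra.
  - destruct (pm_range u); lra. Qed.

Lemma psi_gap u u' : 0 <= u <= 5 -> 0 <= u' <= 5 -> psi_plus u - psi_minus u' > 2.
Proof. intros H H'. unfold psi_plus, psi_minus.
  destruct (sq_facts u) as [A B]; [lra|]. destruct (sq_facts u') as [A' B']; [lra|].
  set (S := sqrt (25 - 4*u)) in *. set (S' := sqrt (25 - 4*u')) in *.
  assert (S > 2) by nra. assert (S' > 2) by nra. lra. Qed.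

Lemma pm_mono u u' : 0 <= u <= u' -> u' <= 25/4 -> psi_minus u <= psi_minus u'.
Proof. intros H H'. unfold psi_minus.
  destruct (sq_facts u) as [A B]; [lra|]. destruct (sq_facts u') as [A' B']; [lra|].
  set (S := sqrt (25 - 4*u)) in *. set (S' := sqrt (25 - 4*u')) in *. nra. Qed.

Lemma pp_anti u u' : 0 <= u <= u' -> u' <= 25/4 -> psi_plus u' <= psi_plus u.
Proof. intros H H'. unfold psi_plus.
  destruct (sq_facts u) as [A B]; [lra|]. destruct (sq_facts u') as [A' B']; [lra|].
  set (S := sqrt (25 - 4*u)) in *. set (S' := sqrt (25 - 4*u')) in *. nra. Qed.

Lemma psi_expand c u u' : 0 <= u <= 5 -> 0 <= u' <= 5 ->
  Rabs (u - u') <= 5 * Rabs (psi c u - psi c u').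
Proof. intros H H'.
  destruct (sq_facts u) as [A B]; [lra|]. destruct (sq_facts u') as [A' B']; [lra|].
  destruct c; simpl; unfold psi_plus, psi_minus;
  set (S := sqrt (25 - 4*u)) in *; set (S' := sqrt (25 - 4*u')) in *;
  assert (S <= 5) by nra; assert (S' <= 5) by nra;
  assert (E : u - u' = (S' - S) * (S' + S) / 4) by (field_simplify; nra);
  rewrite E; unfold Rabs; repeat destruct Rcase_abs; nra. Qed.

Lemma pm_five Y Y' : 0 <= Y <= Y' -> Y' <= 25/4 -> Y' - Y <= 5 * (psi_minus Y' - psi_minus Y).
Proof. intros H H'. unfold psi_minus.
  destruct (sq_facts Y) as [A B]; [lra|]. destruct (sq_facts Y') as [A' B']; [lra|].
  set (S := sqrt (25 - 4*Y)) in *. set (S' := sqrt (25 - 4*Y')) in *.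
  assert (S <= 5) by nra. assert (S' <= S) by nra. nra. Qed.

Lemma pm_self y : 0 <= y <= 25/4 -> y <= 5 * psi_minus y.
Proof. intros H. unfold psi_minus. destruct (sq_facts y H) as [A B].
  set (S := sqrt (25 - 4*y)) in *. nra. Qed.

Lemma pm_f y : 0 <= y <= 25/4 -> psi_minus y * (5 - psi_minus y) = y.
Proof. intros H. unfold psi_minus. destruct (sq_facts y H) as [A B].
  set (S := sqrt (25 - 4*y)) in *. nra. Qed.


Definition aseq z l := 5 ^ l * psi_minus_iter l z.
Definition Lim z := epsilon (inhabits 0) (fun L => Un_cv (aseq z) L).
Lemma Psi_Lim z : Psi z = 3/2 * Lim z.
Proof. reflexivity. Qed.

Lemma iter_range l z : 0 <= z <= 25/4 -> 0 <= psi_minus_iter l z <= 25/4.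
Proof. intros H; induction l; simpl; auto. destruct (pm_range _ IHl); lra. Qed.

Lemma aseq_grow z : 0 <= z <= 25/4 -> Un_growing (aseq z).
Proof. intros H n. unfold aseq. simpl. pose proof (pm_self _ (iter_range n z H)).
  pose proof (pow_lt 5 n ltac:(lra)). nra. Qed.

Definition phi y := 8 * y / (8 - y).

Lemma phi_step y : 0 <= y <= 25/4 -> 5 * phi (psi_minus y) <= phi y.
Proof. intros H. destruct (pm_range y H) as [A B]. pose proof (pm_f y H) as F.
  set (v := psi_minus y) in *. unfold phi.
  assert (Hp : 0 < 8 - v) by lra. assert (Hq : 0 < 8 - y) by lra.
  assert (K: 40 * v * (8 - y) <= 8 * y * (8 - v)).
  { rewrite <- F. nra. }
  unfold Rdiv. 
  replace (5 * (8 * v * / (8 - v))) with (40 * v * (8 - y) * (/ (8-v) * / (8-y))) by (field; lra).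
  replace (8 * y * / (8 - y)) with (8 * y * (8 - v) * (/ (8-v) * / (8-y))) by (field; lra).
  apply Rmult_le_compat_r; auto. 
  apply Rmult_le_pos; left; apply Rinv_0_lt_compat; lra. Qed.

Lemma phi_ge y : 0 <= y <= 25/4 -> y <= phi y.
Proof. intros H. unfold phi. apply (Rmult_le_reg_r (8 - y)). lra.
  unfold Rdiv. rewrite Rmult_assoc, Rinv_l by lra. nra. Qed.

Lemma aseq_bound z : 0 <= z <= 25/4 -> forall l, aseq z l <= phi z.
Proof. intros H l.
  assert (forall l, 5 ^ l * phi (psi_minus_iter l z) <= phi z).
  { induction l0; simpl. lra. pose proof (phi_step _ (iter_range l0 z H)).
    pose proof (pow_lt 5 l0 ltac:(lra)). nra. }
  unfold aseq. pose proof (phi_ge _ (iter_range l z H)). pose proof (H0 l).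
  pose proof (pow_lt 5 l ltac:(lra)). nra. Qed.

Lemma Lim_cv z : 0 <= z <= 25/4 -> Un_cv (aseq z) (Lim z).
Proof. intros H. unfold Lim. apply epsilon_spec.
  destruct (growing_cv (aseq z) (aseq_grow z H)) as [l Hl].
  { exists (phi z). intros x [i ->]. apply aseq_bound; auto. }
  exists l; auto. Qed.

Lemma iter_shift l z : psi_minus_iter l (psi_minus z) = psi_minus_iter (S l) z.
Proof. induction l; simpl; auto. rewrite IHl. reflexivity. Qed.

Lemma Lim_minus z : 0 <= z <= 25/4 -> Lim (psi_minus z) = Lim z / 5.
Proof. intros H. destruct (pm_range z H).
  apply (UL_sequence (aseq (psi_minus z))). apply Lim_cv; lra.
  pose proof (CV_shift' _ 1 _ (Lim_cv z H)) as C.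
  intros eps He. destruct (C (5*eps) ltac:(lra)) as [N HN]. exists N. intros n Hn.
  specialize (HN n Hn). unfold aseq in *. rewrite iter_shift. unfold R_dist in *.
  replace (n+1)%nat with (S n) in HN by lia. simpl in HN.
  apply Rabs_def2 in HN. set (p := psi_minus (psi_minus_iter n z)) in *. set (q := 5 ^ n) in *. simpl psi_minus_iter. fold p. destruct HN. apply Rabs_def1; nra. Qed.

Lemma lim_lower u l c : Un_cv u l -> (forall n, c <= u n) -> c <= l.
Proof. intros Hu Hc. destruct (Rle_or_lt c l); auto.
  destruct (Hu (c - l) ltac:(lra)) as [N HN]. specialize (HN N (le_n _)).
  specialize (Hc N). unfold R_dist in HN. apply Rabs_def2 in HN. lra. Qed.

Lemma Lim_ge z : 0 <= z <= 25/4 -> z <= Lim z.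
Proof. intros H. pose proof (growing_ineq _ _ (aseq_grow z H) (Lim_cv z H) 0).
  unfold aseq in H0; simpl in H0; lra. Qed.

Lemma Lim_diff z z' : 0 <= z <= z' -> z' <= 25/4 -> z' - z <= Lim z' - Lim z.
Proof. intros H H'.
  assert (K: forall l, psi_minus_iter l z <= psi_minus_iter l z' /\
     z' - z <= 5 ^ l * (psi_minus_iter l z' - psi_minus_iter l z)).
  { induction l; simpl. lra. destruct IHl as [A B].
    pose proof (iter_range l z ltac:(lra)). pose proof (iter_range l z' ltac:(lra)).
    split. apply pm_mono; lra.
    pose proof (pm_five _ _ (conj (proj1 H0) A) (proj2 H1)).
    pose proof (pow_lt 5 l ltac:(lra)). nra. }
  apply (lim_lower (fun l => aseq z' l - aseq z l)).
  apply CV_minus; apply Lim_cv; lra.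
  intros n. unfold aseq. destruct (K n). lra. Qed.

Lemma Psi_minus z : 0 <= z <= 25/4 -> Psi (psi_minus z) = Psi z / 5.
Proof. intros; rewrite !Psi_Lim, Lim_minus; auto. field. Qed.
Lemma Psi_ge z : 0 <= z <= 25/4 -> 3/2 * z <= Psi z.
Proof. intros; rewrite Psi_Lim; pose proof (Lim_ge z H); lra. Qed.
Lemma Psi_diff z z' : 0 <= z <= z' -> z' <= 25/4 -> 3/2 * (z' - z) <= Psi z' - Psi z.
Proof. intros; rewrite !Psi_Lim; pose proof (Lim_diff z z' H H0); lra. Qed.
Lemma Psi_plus_ge u : 0 <= u <= 5 -> 15/4 <= Psi (psi_plus u).
Proof. intros. destruct (pp_range u); try lra. pose proof (Psi_ge (psi_plus u)). lra. Qed.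


Fixpoint Cnt (N : nat) (P : R -> bool) (b : R) : nat :=
  match N with
  | O => if P b then 1%nat else 0%nat
  | S N' => (Cnt N' (fun z => P (psi true z)) b + Cnt N' (fun z => P (psi false z)) b)%nat
  end.

Definition I5 u := 0 <= u <= 5.

Lemma Cnt_inner N P b : Cnt (S N) P b = (Cnt N P (psi true b) + Cnt N P (psi false b))%nat.
Proof. revert P. induction N; intros P. reflexivity.
  change (Cnt (S (S N)) P b) with (Cnt (S N) (fun z => P (psi true z)) b + Cnt (S N) (fun z => P (psi false z)) b)%nat.
  rewrite !IHN. simpl. lia. Qed.

Lemma Cnt_ext N P P' b : (forall u, I5 u -> P u = P' u) -> I5 b -> Cnt N P b = Cnt N P' b.
Proof. revert P P'. induction N; intros P P' H Hb; cbn [Cnt].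
  - rewrite H; auto.
  - rewrite (IHN (fun z => P (psi true z)) (fun z => P' (psi true z))), (IHN (fun z => P (psi false z)) (fun z => P' (psi false z))); auto;
    intros; apply H; apply psi_range; auto. Qed.

Lemma Cnt_const N P c b b' : (forall u, I5 u -> P u = c) -> I5 b -> I5 b' -> Cnt N P b = Cnt N P b'.
Proof. revert P. induction N; intros P H Hb Hb'; cbn [Cnt].
  - rewrite !H; auto.
  - rewrite (IHN (fun z => P (psi true z))), (IHN (fun z => P (psi false z))); auto;
    intros; apply H; apply psi_range; auto. Qed.

Lemma Cnt_zero N P b : (forall u, I5 u -> P u = false) -> I5 b -> Cnt N P b = 0%nat.
Proof. revert P. induction N; intros P H Hb; cbn [Cnt].
  - rewrite !H; auto.
  - rewrite (IHN (fun z => P (psi true z))), (IHN (fun z => P (psi false z))); auto;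
    intros; apply H; apply psi_range; auto. Qed.

Lemma Cnt_pow N P b : (Cnt N P b <= 2 ^ N)%nat.
Proof. revert P. induction N; intros P; cbn [Cnt]. destruct (P b); simpl; lia.
  pose proof (IHN (fun z => P (psi true z))). pose proof (IHN (fun z => P (psi false z))). rewrite Nat.pow_succ_r'. lia. Qed.

Lemma Cnt_le_or N P Q R0 b : (forall u, I5 u -> P u = true -> Q u = true \/ R0 u = true) -> I5 b ->
  (Cnt N P b <= Cnt N Q b + Cnt N R0 b)%nat.
Proof. revert P Q R0. induction N; intros P Q R0 H Hb; cbn [Cnt].
  - destruct (P b) eqn:E; [|lia]. destruct (H b Hb E) as [-> | ->]; [lia|]. destruct (Q b); lia.
  - pose proof (IHN (fun z => P (psi true z)) (fun z => Q (psi true z)) (fun z => R0 (psi true z))).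
    pose proof (IHN (fun z => P (psi false z)) (fun z => Q (psi false z)) (fun z => R0 (psi false z))).
    assert (forall c u, I5 u -> P (psi c u) = true -> Q (psi c u) = true \/ R0 (psi c u) = true)
      by (intros; apply H; auto; apply psi_range; auto).
    specialize (H0 (H2 true) Hb). specialize (H1 (H2 false) Hb). lia. Qed.

Lemma Cnt_mono N P Q b : (forall u, I5 u -> P u = true -> Q u = true) -> I5 b ->
  (Cnt N P b <= Cnt N Q b)%nat.
Proof. intros. pose proof (Cnt_le_or N P Q (fun _ => false) b).
  rewrite (Cnt_zero N (fun _ => false)) in H1; auto. rewrite Nat.add_0_r in H1. apply H1; auto. Qed.

Definition downset (P : R -> bool) := forall u u', 0 <= u -> u <= u' -> u' <= 5 -> P u' = true -> P u = true.
Definition upset (P : R -> bool) := forall u u', 0 <= u -> u <= u' -> u' <= 5 -> P u = true -> P u' = true.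

Lemma straddle N P b b' : (downset P \/ upset P) -> I5 b -> I5 b' -> (Cnt N P b <= Cnt N P b' + 1)%nat.
Proof. revert P. induction N; intros P HP Hb Hb'; cbn [Cnt]. destruct (P b), (P b'); lia.
  assert (Hm : forall u u', 0 <= u -> u <= u' -> u' <= 5 -> psi false u <= psi false u') by
    (intros; simpl; apply pm_mono; lra).
  assert (Hp : forall u u', 0 <= u -> u <= u' -> u' <= 5 -> psi true u' <= psi true u) by
    (intros; simpl; apply pp_anti; lra).
  assert (R : forall c u, 0 <= u <= 5 -> 0 <= psi c u <= 5) by (intros; apply psi_range; auto).
  assert (G : forall u u', I5 u -> I5 u' -> psi false u' <= psi true u) by
    (intros; simpl; pose proof (psi_gap u u' H H0); lra).
  assert (HPp : downset (fun z => P (psi true z)) \/ upset (fun z => P (psi true z))).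
  { destruct HP as [HP|HP]; [right|left]; intros u u' ? ? ? ?;
    [eapply (HP (psi true u') (psi true u))| eapply (HP (psi true u') (psi true u))]; eauto;
    try apply R; try apply Hp; try lra; apply R; lra. }
  assert (HPm : downset (fun z => P (psi false z)) \/ upset (fun z => P (psi false z))).
  { destruct HP as [HP|HP]; [left|right]; intros u u' ? ? ? ?;
    [eapply (HP (psi false u) (psi false u'))| eapply (HP (psi false u) (psi false u'))]; eauto;
    try apply R; try apply Hm; try lra; apply R; lra. }
  pose proof (IHN _ HPp Hb Hb'). pose proof (IHN _ HPm Hb Hb').
  assert (Hc : (exists c, forall u, I5 u -> P (psi true u) = c) \/ (exists c, forall u, I5 u -> P (psi false u) = c)).
  { destruct HP as [HP|HP].
    - destruct (classic (exists u0, I5 u0 /\ P (psi false u0) = false)) as [[u0 [Hu0 E]]|NE].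
      + left. exists false. intros u Hu. destruct (P (psi true u)) eqn:E'; auto.
        destruct (R false u0 Hu0), (R true u Hu). pose proof (G u u0 Hu Hu0).
        assert (P (psi false u0) = true) by (apply (HP _ (psi true u)); auto; lra). congruence.
      + right. exists true. intros u Hu. destruct (P (psi false u)) eqn:E'; auto.
        exfalso; apply NE; eauto.
    - destruct (classic (exists u0, I5 u0 /\ P (psi true u0) = false)) as [[u0 [Hu0 E]]|NE].
      + right. exists false. intros u Hu. destruct (P (psi false u)) eqn:E'; auto.
        destruct (R false u Hu), (R true u0 Hu0). pose proof (G u0 u Hu0 Hu).
        assert (P (psi true u0) = true) by (apply (HP (psi false u)); auto; lra). congruence.
      + left. exists true. intros u Hu. destruct (P (psi true u)) eqn:E'; auto.
        exfalso; apply NE; eauto. }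
  destruct Hc as [[c Hc]|[c Hc]].
  - rewrite (Cnt_const N _ c b b'); auto. lia.
  - rewrite (Cnt_const N (fun z => P (psi false z)) c b b'); auto. lia. Qed.

Definition Diam (P : R -> bool) D := forall u u', I5 u -> I5 u' -> P u = true -> P u' = true -> Rabs (u - u') <= D.

Lemma diam_cnt k : forall n P b, Diam P (2 / 5 ^ k) -> I5 b -> (Cnt (k + n) P b <= 2 ^ n)%nat.
Proof. induction k; intros n P b HD Hb. apply Cnt_pow.
  change (S k + n)%nat with (S (k+n)). cbn [Cnt].
  assert (R : forall c u, I5 u -> I5 (psi c u)) by (intros; apply psi_range; auto).
  pose proof (pow_lt 5 k ltac:(lra)).
  assert (HDc : forall c, Diam (fun z => P (psi c z)) (2 / 5 ^ k)).
  { intros c u u' Hu Hu' E E'. pose proof (HD _ _ (R c u Hu) (R c u' Hu') E E').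
    pose proof (psi_expand c u u' Hu Hu'). simpl pow in H0.
    replace (2 / (5 * 5 ^ k)) with ((2 / 5 ^ k) / 5) in H0 by (field; lra). lra. }
  assert (small : 2 / 5 ^ S k <= 2).
  { simpl. assert (1 <= 5 ^ k) by (apply pow_R1_Rle; lra).
    apply (Rmult_le_reg_r (5 * 5 ^ k)). nra. unfold Rdiv. rewrite Rmult_assoc, Rinv_l by lra. nra. }
  destruct (classic (exists u0, I5 u0 /\ P (psi true u0) = true)) as [[u0 [Hu0 E]]|NE].
  - rewrite (Cnt_zero _ (fun z => P (psi false z))); auto.
    + rewrite Nat.add_0_r. apply IHk; auto.
    + intros u Hu. destruct (P (psi false u)) eqn:E'; auto. exfalso.
      pose proof (HD _ _ (R true u0 Hu0) (R false u Hu) E E'). simpl in H0.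
      pose proof (psi_gap u0 u Hu0 Hu). rewrite Rabs_right in H0 by lra. simpl in small. lra.
  - rewrite (Cnt_zero _ (fun z => P (psi true z))); auto.
    + simpl plus. apply IHk; [apply (HDc false)|auto].
    + intros u Hu. destruct (P (psi true u)) eqn:E'; auto. exfalso; apply NE; eauto. Qed.


Lemma Rabs_le_between x c : Rabs x <= c -> - c <= x <= c.
Proof. unfold Rabs; destruct Rcase_abs; intros; lra. Qed.

Definition Qb s z := if Rle_dec (Psi z) s then true else false.

Lemma Qb_down s : downset (Qb s).
Proof. intros u u' H1 H2 H3. unfold Qb. destruct Rle_dec; try discriminate. intros _.
  pose proof (Psi_diff u u' (conj H1 H2) ltac:(lra)). destruct Rle_dec; auto. lra. Qed.

Definition GN b s N := INR (Cnt N (Qb s) b) / 2 ^ N.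

Lemma nat_close (a c : nat) : (a <= c + 1)%nat -> (c <= a + 1)%nat -> Rabs (INR a - INR c) <= 1.
Proof. intros. apply Rabs_le. split.
  - apply le_INR in H0. rewrite plus_INR in H0. simpl in H0. lra.
  - apply le_INR in H. rewrite plus_INR in H. simpl in H. lra. Qed.

Lemma GN_step b s N : I5 b -> Rabs (GN b s (S N) - GN b s N) <= / 2 ^ N.
Proof. intros Hb. unfold GN. rewrite Cnt_inner.
  assert (R : forall c, I5 (psi c b)) by (intros; apply psi_range; auto).
  assert (D : downset (Qb s) \/ upset (Qb s)) by (left; apply Qb_down).
  pose proof (nat_close _ _ (straddle N _ _ _ D (R true) Hb) (straddle N _ _ _ D Hb (R true))).
  pose proof (nat_close _ _ (straddle N _ _ _ D (R false) Hb) (straddle N _ _ _ D Hb (R false))).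
  rewrite plus_INR. set (a := INR (Cnt N (Qb s) (psi true b))) in *.
  set (a' := INR (Cnt N (Qb s) (psi false b))) in *. set (c := INR (Cnt N (Qb s) b)) in *.
  pose proof (pow_lt 2 N ltac:(lra)). simpl pow.
  replace ((a + a') / (2 * 2 ^ N) - c / 2 ^ N) with (((a - c) + (a' - c)) / 2 * / 2 ^ N) by (field; lra).
  rewrite Rabs_mult, (Rabs_right (/ 2 ^ N)) by (left; apply Rinv_0_lt_compat; lra).
  rewrite <- (Rmult_1_l (/ 2 ^ N)) at 2. apply Rmult_le_compat_r. left; apply Rinv_0_lt_compat; lra.
  pose proof (Rabs_triang (a - c) (a' - c)). 
  unfold Rdiv. rewrite Rabs_mult, (Rabs_right (/2)) by lra. lra. Qed.

Lemma GN_cauchy b s N k : I5 b -> Rabs (GN b s (N + k) - GN b s N) <= 2 / 2 ^ N - 2 / 2 ^ (N + k).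
Proof. intros Hb. induction k.
  - rewrite Nat.add_0_r. unfold Rminus. rewrite !Rplus_opp_r, Rabs_R0. lra.
  - rewrite Nat.add_succ_r. pose proof (GN_step b s (N + k) Hb).
    pose proof (Rabs_triang (GN b s (S (N + k)) - GN b s (N + k)) (GN b s (N + k) - GN b s N)).
    replace (GN b s (S (N + k)) - GN b s (N + k) + (GN b s (N + k) - GN b s N)) with
      (GN b s (S (N + k)) - GN b s N) in H0 by ring.
    pose proof (pow_lt 2 (N+k) ltac:(lra)). simpl pow.
    replace (2 / (2 * 2 ^ (N + k))) with (2 / 2 ^ (N + k) - / 2 ^ (N+k)) by (field; lra).
    lra. Qed.

Definition G b s := epsilon (inhabits 0) (fun l => Un_cv (fun N => GN b s N) l).

Lemma inv_pow_small r : 1 < r -> forall y, 0 < y -> exists N, forall n, (n >= N)%nat -> / r ^ n < y.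
Proof. intros Hr y Hy. destruct (pow_lt_1_zero (/ r)) with y as [N HN]; auto.
  rewrite Rabs_right. apply (Rmult_lt_reg_r r). lra. rewrite Rinv_l; lra.
  left; apply Rinv_0_lt_compat; lra.
  exists N. intros n Hn. specialize (HN n Hn). rewrite <- pow_inv.
  rewrite Rabs_right in HN; auto. left. apply pow_lt. apply Rinv_0_lt_compat; lra. Qed.

Lemma G_cv b s : I5 b -> Un_cv (fun N => GN b s N) (G b s).
Proof. intros Hb. unfold G. apply epsilon_spec.
  destruct (R_complete (fun N => GN b s N)) as [l Hl]; [|exists l; auto].
  intros eps He. destruct (inv_pow_small 2 ltac:(lra) (eps/4) ltac:(lra)) as [N HN].
  exists N. intros n m Hn Hm. unfold R_dist.
  pose proof (GN_cauchy b s N (n - N) Hb). pose proof (GN_cauchy b s N (m - N) Hb).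
  replace (N + (n - N))%nat with n in H by lia. replace (N + (m - N))%nat with m in H0 by lia.
  specialize (HN N (le_n _)). pose proof (pow_lt 2 n ltac:(lra)). pose proof (pow_lt 2 m ltac:(lra)).
  pose proof (pow_lt 2 N ltac:(lra)).
  assert (0 < 2 / 2 ^ n) by (apply Rdiv_lt_0_compat; lra).
  assert (0 < 2 / 2 ^ m) by (apply Rdiv_lt_0_compat; lra).
  assert (2 / 2 ^ N = 2 * / 2 ^ N) by (unfold Rdiv; ring).
  pose proof (Rabs_triang (GN b s n - GN b s N) (GN b s N - GN b s m)).
  rewrite Rabs_minus_sym with (x := GN b s N) in H7.
  replace (GN b s n - GN b s N + (GN b s N - GN b s m)) with (GN b s n - GN b s m) in H7 by ring.
  lra. Qed.

Lemma lim_abs u l a c k : Un_cv u l -> (forall n, (n >= k)%nat -> Rabs (u n - a) <= c) -> Rabs (l - a) <= c.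
Proof. intros Hu Hc. destruct (Rle_or_lt (Rabs (l - a)) c); auto.
  destruct (Hu (Rabs (l - a) - c) ltac:(lra)) as [N HN]. specialize (HN (max N k) ltac:(lia)).
  specialize (Hc (max N k) ltac:(lia)). unfold R_dist in HN.
  pose proof (Rabs_triang (l - u (max N k)) (u (max N k) - a)).
  rewrite Rabs_minus_sym in HN. replace (l - u (max N k) + (u (max N k) - a)) with (l - a) in H0 by ring. lra. Qed.

Lemma G_close b s N : I5 b -> Rabs (GN b s N - G b s) <= 2 / 2 ^ N.
Proof. intros Hb. rewrite Rabs_minus_sym. apply (lim_abs _ _ _ _ N (G_cv b s Hb)).
  intros n Hn. pose proof (GN_cauchy b s N (n - N) Hb). replace (N + (n - N))%nat with n in H by lia.
  pose proof (pow_lt 2 n ltac:(lra)). assert (0 < 2 / 2 ^ n) by (apply Rdiv_lt_0_compat; lra). lra. Qed.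

Lemma zero_of_small a : (forall N, Rabs a <= 4 / 2 ^ N) -> a = 0.
Proof. intros H. destruct (Req_dec a 0); auto. exfalso.
  assert (Ha : 0 < Rabs a) by (apply Rabs_pos_lt; auto).
  destruct (inv_pow_small 2 ltac:(lra) (Rabs a / 4) ltac:(lra)) as [N HN].
  specialize (HN N (le_n _)). specialize (H N). unfold Rdiv in H. lra. Qed.

Lemma G_scale b s : I5 b -> s < 75/4 -> G b (s / 5) = G b s / 2.
Proof. intros Hb Hs. apply Rminus_diag_uniq. apply zero_of_small. intros N.
  assert (E : GN b (s/5) (S N) = GN b s N / 2).
  { unfold GN. cbn [Cnt]. rewrite (Cnt_zero N (fun z => Qb (s/5) (psi true z))); auto.
    - rewrite (Cnt_ext N (fun z => Qb (s/5) (psi false z)) (Qb s)); auto.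
      + simpl plus. simpl pow. field. apply pow_nonzero. lra.
      + intros u Hu. simpl. unfold Qb. rewrite Psi_minus by (unfold I5 in Hu; lra).
        destruct Rle_dec, Rle_dec; auto; lra.
    - intros u Hu. simpl. unfold Qb. pose proof (Psi_plus_ge u Hu). destruct Rle_dec; auto; lra. }
  pose proof (G_close b (s/5) (S N) Hb). pose proof (G_close b s N Hb).
  rewrite E in H. simpl pow in H. pose proof (pow_lt 2 N ltac:(lra)).
  replace (2 / (2 * 2 ^ N)) with (/ 2 ^ N) in H by (field; lra).
  assert (2 / 2 ^ N = 2 * / 2 ^ N) by (unfold Rdiv; ring).
  assert (4 / 2 ^ N = 4 * / 2 ^ N) by (unfold Rdiv; ring).
  apply Rabs_le_between in H. apply Rabs_le_between in H0. apply Rabs_le. lra. Qed.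

Lemma G_mod b s s' k : I5 b -> s <= s' -> s' - s <= 3 / 5 ^ k -> Rabs (G b s' - G b s) <= 2 / 2 ^ k.
Proof. intros Hb H1 H2.
  assert (K : forall n, 0 <= GN b s' (k + n) - GN b s (k + n) <= / 2 ^ k).
  { intros n. unfold GN.
    assert (A : (Cnt (k+n) (Qb s) b <= Cnt (k+n) (Qb s') b)%nat).
    { apply Cnt_mono; auto. intros u _. unfold Qb. destruct Rle_dec; try discriminate.
      destruct Rle_dec; auto; lra. }
    set (R0 := fun z => andb (Qb s' z) (negb (Qb s z))).
    assert (B : (Cnt (k+n) (Qb s') b <= Cnt (k+n) (Qb s) b + Cnt (k+n) R0 b)%nat).
    { apply Cnt_le_or; auto. intros u _ Hq. unfold R0. rewrite Hq. destruct (Qb s u); auto. }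
    assert (C : (Cnt (k+n) R0 b <= 2 ^ n)%nat).
    { apply diam_cnt; auto. intros u u' Hu Hu' E E'. unfold R0, Qb in E, E'.
      destruct (Rle_dec (Psi u) s'), (Rle_dec (Psi u) s), (Rle_dec (Psi u') s'), (Rle_dec (Psi u') s);
        simpl in E, E'; try discriminate.
      pose proof (pow_lt 5 k ltac:(lra)).
      assert (3 / 5 ^ k = 3/2 * (2 / 5 ^ k)) by (field; lra).
      unfold I5 in *. destruct (Rle_or_lt u u').
      - pose proof (Psi_diff u u' ltac:(lra) ltac:(lra)). rewrite Rabs_left1 by lra. lra.
      - pose proof (Psi_diff u' u ltac:(lra) ltac:(lra)). rewrite Rabs_right by lra. lra. }
    apply le_INR in A. apply le_INR in B. apply le_INR in C. rewrite plus_INR in B.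
    rewrite pow_INR in C. replace (INR 2) with 2 in C by (simpl; lra). rewrite pow_add.
    pose proof (pow_lt 2 k ltac:(lra)). pose proof (pow_lt 2 n ltac:(lra)).
    split.
    - unfold Rdiv. rewrite <- Rmult_minus_distr_r. apply Rmult_le_pos. lra.
      left; apply Rinv_0_lt_compat; nra.
    - unfold Rdiv. rewrite <- Rmult_minus_distr_r. rewrite Rinv_mult.
      apply (Rmult_le_reg_r (2 ^ k * 2 ^ n)). nra.
      replace ((INR (Cnt (k + n) (Qb s') b) - INR (Cnt (k + n) (Qb s) b)) * (/ 2 ^ k * / 2 ^ n) * (2 ^ k * 2 ^ n))
        with (INR (Cnt (k + n) (Qb s') b) - INR (Cnt (k + n) (Qb s) b)) by (field; lra).
      replace (/ 2 ^ k * (2 ^ k * 2 ^ n)) with (2 ^ n) by (field; lra). lra. }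
  pose proof (G_close b s (k + 2) Hb). pose proof (G_close b s' (k + 2) Hb). specialize (K 2%nat).
  rewrite pow_add in H, H0. simpl pow in H, H0. pose proof (pow_lt 2 k ltac:(lra)).
  replace (2 / (2 ^ k * (2 * (2 * 1)))) with (/ 2 ^ k / 2) in H, H0 by (field; lra).
  replace (2 / 2 ^ k) with (/ 2 ^ k * 2) by (field; lra).
  apply Rabs_le. apply Rabs_le_between in H. apply Rabs_le_between in H0. lra. Qed.


Definition J u := epsilon (inhabits 0%nat) (fun j => u / 5 ^ j < 75/4).
Definition Gt b u := 2 ^ (J u) * G b (u / 5 ^ (J u)).

Lemma valid_ex u : exists j, u / 5 ^ j < 75/4.
Proof. destruct (inv_pow_small 5 ltac:(lra) (75 / 4 / (Rabs u + 1))) as [N HN].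
  apply Rdiv_lt_0_compat; [lra|]. pose proof (Rabs_pos u); lra.
  exists N. specialize (HN N (le_n _)). pose proof (pow_lt 5 N ltac:(lra)).
  pose proof (Rabs_pos u). pose proof (Rle_abs u).
  assert (u / 5 ^ N <= Rabs u * / 5 ^ N). { unfold Rdiv. apply Rmult_le_compat_r; [left; apply Rinv_0_lt_compat|]; lra. }
  assert (Rabs u * / 5 ^ N <= Rabs u * (75 / 4 / (Rabs u + 1))).
  { apply Rmult_le_compat_l; lra. }
  assert (Rabs u * (75 / 4 / (Rabs u + 1)) < 75/4).
  { apply (Rmult_lt_reg_r (Rabs u + 1)). lra. unfold Rdiv.
    replace (Rabs u * (75 * / 4 * / (Rabs u + 1)) * (Rabs u + 1)) with (Rabs u * (75/4)) by (field; lra). lra. }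
  lra. Qed.

Lemma J_valid u : u / 5 ^ J u < 75/4.
Proof. unfold J. apply epsilon_spec. apply valid_ex. Qed.

Lemma valid_S u j : u / 5 ^ j < 75/4 -> u / 5 ^ S j < 75/4.
Proof. intros. pose proof (pow_lt 5 j ltac:(lra)). simpl pow.
  replace (u / (5 * 5 ^ j)) with ((u / 5 ^ j) / 5) by (field; lra).
  destruct (Rle_or_lt 0 (u / 5 ^ j)); lra. Qed.

Lemma valid_shift b u j k : I5 b -> u / 5 ^ j < 75/4 ->
  2 ^ (j + k) * G b (u / 5 ^ (j + k)) = 2 ^ j * G b (u / 5 ^ j).
Proof. intros Hb H. induction k. rewrite Nat.add_0_r; auto.
  assert (V : u / 5 ^ (j + k) < 75/4).
  { clear IHk. induction k. rewrite Nat.add_0_r; auto. rewrite Nat.add_succ_r. apply valid_S; auto. }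
  rewrite Nat.add_succ_r. rewrite <- IHk. simpl pow.
  pose proof (pow_lt 5 (j+k) ltac:(lra)).
  replace (u / (5 * 5 ^ (j + k))) with ((u / 5 ^ (j + k)) / 5) by (field; lra).
  rewrite G_scale; auto. field. Qed.

Lemma Gt_eq b u j : I5 b -> u / 5 ^ j < 75/4 -> Gt b u = 2 ^ j * G b (u / 5 ^ j).
Proof. intros Hb H. unfold Gt. pose proof (J_valid u).
  destruct (Nat.le_ge_cases j (J u)).
  - replace (J u) with (j + (J u - j))%nat by lia. apply valid_shift; auto.
  - replace j with (J u + (j - J u))%nat by lia. symmetry. apply valid_shift; auto. Qed.

Lemma Gt_5 b u : I5 b -> Gt b (5 * u) = 2 * Gt b u.
Proof. intros Hb. destruct (valid_ex u) as [j Hj].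
  rewrite (Gt_eq b u j), (Gt_eq b (5*u) (S j)); auto.
  - simpl pow. pose proof (pow_lt 5 j ltac:(lra)).
    replace (5 * u / (5 * 5 ^ j)) with (u / 5 ^ j) by (field; lra). ring.
  - simpl pow. pose proof (pow_lt 5 j ltac:(lra)).
    replace (5 * u / (5 * 5 ^ j)) with (u / 5 ^ j) by (field; lra). auto. Qed.

Lemma G_cont b s : I5 b -> continuity_pt (G b) s.
Proof. intros Hb eps He.
  destruct (inv_pow_small 2 ltac:(lra) (eps/2) ltac:(lra)) as [k Hk]. specialize (Hk k (le_n _)).
  exists (3 / 5 ^ k). split. apply Rdiv_lt_0_compat. lra. apply pow_lt; lra.
  intros x [_ Hx]. simpl in *. unfold Rdist in *.
  assert (2 / 2 ^ k < eps) by (unfold Rdiv; lra).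
  destruct (Rle_or_lt s x).
  - rewrite Rabs_right in Hx by lra. pose proof (G_mod b s x k Hb H0 ltac:(lra)). lra.
  - rewrite Rabs_left in Hx by lra. pose proof (G_mod b x s k Hb ltac:(lra) ltac:(lra)).
    rewrite Rabs_minus_sym. lra. Qed.

Lemma Gt_cont b u0 : I5 b -> continuity_pt (Gt b) u0.
Proof. intros Hb. destruct (valid_ex (Rabs u0 + 1)) as [j Hj].
  pose proof (pow_lt 5 j ltac:(lra)).
  apply continuity_pt_locally_ext with (f := fun u => 2 ^ j * G b (u / 5 ^ j)) (a := 1). lra.
  - intros y Hy. symmetry. apply Gt_eq; auto. unfold Rdist in Hy.
    pose proof (Rabs_triang_inv y u0). pose proof (Rle_abs y).
    assert (y / 5 ^ j <= (Rabs u0 + 1) / 5 ^ j).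
    { unfold Rdiv. apply Rmult_le_compat_r. left; apply Rinv_0_lt_compat; lra. lra. }
    lra.
  - apply continuity_pt_mult with (f1 := fun _ => 2 ^ j) (f2 := fun u => G b (u / 5 ^ j)).
    apply continuity_pt_const. intros x y; auto.
    apply continuity_pt_comp with (f1 := fun u => u / 5 ^ j) (f2 := G b).
    + apply derivable_continuous_pt. unfold Rdiv.
      apply derivable_pt_mult with (f1 := id) (f2 := fun _ => / 5 ^ j).
      apply derivable_pt_id. apply derivable_pt_const.
    + apply G_cont; auto. Qed.


Fixpoint words (n : nat) : list (list bool) :=
  match n with O => nil :: nil
  | S n' => map (cons true) (words n') ++ map (cons false) (words n') end.

Lemma words_in n w : In w (words n) <-> length w = n.
Proof. revert w; induction n; intros w; simpl.
  - split. intros [<-|[]]; auto. destruct w; simpl; try discriminate; auto.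
  - rewrite in_app_iff, !in_map_iff. split.
    + intros [[x [<- Hx]]|[x [<- Hx]]]; simpl; f_equal; apply IHn; auto.
    + destruct w as [|[|] w]; simpl; try discriminate; intros H; injection H; intros;
      [left|right]; exists w; split; auto; apply IHn; auto. Qed.

Lemma words_nodup n : NoDup (words n).
Proof. induction n; simpl. constructor; auto. constructor.
  apply NoDup_app; try (apply Injective_map_NoDup; auto; intros x y H; injection H; auto).
  intros a H1 H2. apply in_map_iff in H1, H2. destruct H1 as [x [<- _]]. destruct H2 as [y [H _]].
  discriminate. Qed.

Lemma filter_map_len {A B} (f : B -> bool) (g : A -> B) l :
  length (filter f (map g l)) = length (filter (fun x => f (g x)) l).
Proof. induction l; simpl; auto. destruct (f (g a)); simpl; auto. Qed.

Lemma cnt_list N P b : length (filter (fun w => P (psi_seq w b)) (words N)) = Cnt N P b.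
Proof. revert P; induction N; intros P. simpl. destruct (P b); auto.
  cbn [words Cnt]. rewrite filter_app, length_app, !filter_map_len.
  rewrite <- (IHN (fun z => P (psi true z))), <- (IHN (fun z => P (psi false z))). reflexivity. Qed.

Lemma psi_seq_range e b : I5 b -> I5 (psi_seq e b).
Proof. intros Hb; induction e; simpl; auto. apply psi_range; auto. Qed.

Definition inEb (e : list bool) := match e with nil => true | true :: _ => true | _ => false end.
Lemma inEb_spec e : inE e <-> inEb e = true.
Proof. unfold inE. destruct e as [|[|] t]; simpl; split; auto; intros H.
  - eauto.
  - destruct H as [H|[t' H]]; discriminate.
  - discriminate. Qed.

Lemma pow5_big y : exists n, y < 5 ^ n.
Proof. destruct (inv_pow_small 5 ltac:(lra) (/ (Rabs y + 1))) as [N HN].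
  apply Rinv_0_lt_compat. pose proof (Rabs_pos y); lra.
  exists N. specialize (HN N (le_n _)). pose proof (pow_lt 5 N ltac:(lra)).
  pose proof (Rabs_pos y). pose proof (Rle_abs y).
  apply Rinv_lt_contravar in HN. rewrite !Rinv_inv in HN. lra.
  apply Rmult_lt_0_compat. apply Rinv_0_lt_compat; lra. apply Rinv_0_lt_compat; lra. Qed.

Lemma nodup_len {A} (l1 l2 : list A) : NoDup l1 -> NoDup l2 -> (forall e, In e l1 <-> In e l2) -> length l1 = length l2.
Proof. intros. apply Nat.le_antisymm; apply NoDup_incl_length; auto; intros a Ha; apply H1; auto. Qed.

Lemma count_unique m0 lam0 x n1 n2 : count_is m0 lam0 x n1 -> count_is m0 lam0 x n2 -> n1 = n2.
Proof. intros [l1 [N1 [L1 I1]]] [l2 [N2 [L2 I2]]]. subst. apply nodup_len; auto.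
  intros e. rewrite I1, I2. tauto. Qed.

Lemma flat_words_nodup a n : NoDup (flat_map words (seq a n)).
Proof. revert a; induction n; intros a; simpl. constructor.
  apply NoDup_app; auto. apply words_nodup. intros e H1 H2. apply words_in in H1.
  apply in_flat_map in H2. destruct H2 as [k [Hk He]]. apply in_seq in Hk. apply words_in in He. lia. Qed.

Lemma flat_words_in N e : In e (flat_map words (seq 0 (S N))) <-> (length e <= N)%nat.
Proof. rewrite in_flat_map. split.
  - intros [k [Hk He]]. apply in_seq in Hk. apply words_in in He. lia.
  - intros H. exists (length e). split. apply in_seq. lia. apply words_in; auto. Qed.

Lemma c_pos m : 0 < powerRZ 5 m. Proof. apply powerRZ_lt; lra. Qed.
Lemma pz m n : powerRZ 5 (Z.of_nat n + m) = 5 ^ n * powerRZ 5 m.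
Proof. rewrite powerRZ_add by lra. rewrite pow_powerRZ. reflexivity. Qed.

Definition PN m x N z := if Rle_dec (5 ^ N * powerRZ 5 m * Psi z) x then true else false.
Definition pE m0 lam0 x e := andb (inEb e) (if Rle_dec (lambda_e m0 lam0 e) x then true else false).

Lemma A_eq (m0 : Z) (lam0 b0 : R) (m : Z) (Hb : I5 b0) (Hlam : forall e, lambda_e m0 lam0 e = powerRZ 5 (Z.of_nat (length e) + m) * Psi (psi_seq e b0)) (x : R) N : length (filter (pE m0 lam0 x) (flat_map words (seq 0 (S N)))) = Cnt N ((PN m x N)) b0.
Proof. induction N.
  - unfold PN. simpl. unfold pE. rewrite Hlam, pz. simpl. replace (1 * powerRZ 5 m) with (powerRZ 5 m) by ring.
    destruct Rle_dec; reflexivity.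
  - rewrite seq_S, flat_map_app, filter_app, length_app, IHN. simpl flat_map. rewrite app_nil_r.
    cbn [words Cnt]. rewrite filter_app, length_app, !filter_map_len.
    assert (E1 : length (filter (fun w => pE m0 lam0 x (false :: w)) (words N)) = 0%nat).
    { unfold pE. simpl. clear. induction (words N); simpl; auto. }
    rewrite E1, Nat.add_0_r.
    rewrite (Cnt_ext N (fun z => (PN m x (S N)) (psi false z)) ((PN m x N))); auto.
    + rewrite <- (cnt_list N (fun z => (PN m x (S N)) (psi true z))). rewrite Nat.add_comm. f_equal. f_equal. apply filter_ext_in. intros w Hw. apply words_in in Hw.
      unfold pE. simpl inEb. rewrite Hlam, pz. unfold PN. simpl length. rewrite Hw. simpl psi_seq.
      reflexivity.
    + intros u Hu. unfold PN. simpl psi. rewrite Psi_minus by (unfold I5 in Hu; lra).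
      simpl pow. destruct Rle_dec, Rle_dec; auto.
      * exfalso. apply n. replace (5 ^ N * (powerRZ 5 m) * Psi u) with (5 * 5 ^ N * (powerRZ 5 m) * (Psi u / 5)) by field. auto.
      * exfalso. apply n. replace (5 * 5 ^ N * (powerRZ 5 m) * (Psi u / 5)) with (5 ^ N * (powerRZ 5 m) * Psi u) by field. auto. Qed.

Lemma K_ex (m0 : Z) (lam0 b0 : R) (m : Z) (Hb : I5 b0) (Hlam : forall e, lambda_e m0 lam0 e = powerRZ 5 (Z.of_nat (length e) + m) * Psi (psi_seq e b0)) (x : R) : exists K, forall e, inE e -> lambda_e m0 lam0 e <= x -> (length e <= K)%nat.
Proof. destruct (pow5_big (x / (powerRZ 5 m * (15/4)))) as [K HK]. exists K.
  intros e HE Hl. destruct (le_lt_dec (length e) K); auto. exfalso.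
  destruct HE as [->|[t ->]]. simpl in l; lia.
  rewrite Hlam, pz in Hl. simpl psi_seq in Hl. simpl psi in Hl.
  pose proof (Psi_plus_ge _ (psi_seq_range t b0 Hb)).
  pose proof (Rle_pow 5 K (length (true :: t)) ltac:(lra) ltac:(lia)).
  pose proof (c_pos m). pose proof (pow_lt 5 K ltac:(lra)).
  assert (x < 5 ^ K * (powerRZ 5 m * (15/4))).
  { apply (Rmult_lt_reg_r (/ (powerRZ 5 m * (15/4)))). apply Rinv_0_lt_compat; nra.
    rewrite Rmult_assoc, Rinv_r by nra. unfold Rdiv in HK. lra. }
  set (L := 5 ^ length (true :: t)) in *. set (P := Psi (psi_plus (psi_seq t b0))) in *.
  assert (L * (powerRZ 5 m) * (15/4) <= L * (powerRZ 5 m) * P) by (apply Rmult_le_compat_l; nra).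
  assert (5 ^ K * (powerRZ 5 m) <= L * (powerRZ 5 m)) by (apply Rmult_le_compat_r; lra). nra. Qed.

Lemma count_at (m0 : Z) (lam0 b0 : R) (m : Z) (Hb : I5 b0) (Hlam : forall e, lambda_e m0 lam0 e = powerRZ 5 (Z.of_nat (length e) + m) * Psi (psi_seq e b0)) (x : R) N : (forall e, inE e -> lambda_e m0 lam0 e <= x -> (length e <= N)%nat) ->
  count_is m0 lam0 x (Cnt N ((PN m x N)) b0).
Proof. intros HK. exists (filter (pE m0 lam0 x) (flat_map words (seq 0 (S N)))). split; [|split].
  - apply NoDup_filter, flat_words_nodup.
  - apply (A_eq m0 lam0 b0 m Hb Hlam x).
  - intros e. rewrite filter_In, flat_words_in. unfold pE. rewrite Bool.andb_true_iff, <- inEb_spec.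
    split.
    + intros [_ [H1 H2]]. destruct Rle_dec; try discriminate; auto.
    + intros [H1 H2]. split. apply HK; auto. split; auto. destruct Rle_dec; auto. Qed.

Lemma rho_at (m0 : Z) (lam0 b0 : R) (m : Z) (Hb : I5 b0) (Hlam : forall e, lambda_e m0 lam0 e = powerRZ 5 (Z.of_nat (length e) + m) * Psi (psi_seq e b0)) (x : R) N : (forall e, inE e -> lambda_e m0 lam0 e <= x -> (length e <= N)%nat) ->
  rho m0 lam0 x = INR (Cnt N ((PN m x N)) b0).
Proof. intros HK. unfold rho. f_equal. apply (count_unique m0 lam0 x).
  apply epsilon_spec. eexists; apply (count_at m0 lam0 b0 m Hb Hlam x); eauto. apply (count_at m0 lam0 b0 m Hb Hlam x); auto. Qed.

Lemma rho_close (m0 : Z) (lam0 b0 : R) (m : Z) (Hb : I5 b0) (Hlam : forall e, lambda_e m0 lam0 e = powerRZ 5 (Z.of_nat (length e) + m) * Psi (psi_seq e b0)) (x : R) : Rabs (rho m0 lam0 x - Gt b0 (x / powerRZ 5 m)) <= 2.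
Proof. destruct (K_ex m0 lam0 b0 m Hb Hlam x) as [K HK]. destruct (valid_ex (x / powerRZ 5 m)) as [j Hj].
  set (N := max K j).
  assert (VN : x / powerRZ 5 m / 5 ^ N < 75/4).
  { unfold N. replace (max K j) with (j + (max K j - j))%nat by lia. generalize (max K j - j)%nat.
    intros k; induction k. rewrite Nat.add_0_r; auto. rewrite Nat.add_succ_r. apply valid_S; auto. }
  rewrite (rho_at m0 lam0 b0 m Hb Hlam x N) by (intros; pose proof (HK e H H0); lia).
  rewrite (Gt_eq b0 _ N Hb VN).
  pose proof (c_pos m). pose proof (pow_lt 5 N ltac:(lra)). pose proof (pow_lt 2 N ltac:(lra)).
  rewrite (Cnt_ext N ((PN m x N)) (Qb (x / powerRZ 5 m / 5 ^ N))); auto.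
  - pose proof (G_close b0 (x / powerRZ 5 m / 5 ^ N) N Hb). unfold GN in H2.
    set (C := INR (Cnt N (Qb (x / powerRZ 5 m / 5 ^ N)) b0)) in *. set (g := G b0 (x / powerRZ 5 m / 5 ^ N)) in *.
    replace (C / 2 ^ N - g) with ((C - 2 ^ N * g) * / 2 ^ N) in H2 by (field; lra).
    rewrite Rabs_mult, (Rabs_right (/ 2 ^ N)) in H2 by (left; apply Rinv_0_lt_compat; lra).
    apply (Rmult_le_reg_r (/ 2 ^ N)). apply Rinv_0_lt_compat; lra. unfold Rdiv in H2. lra.
  - intros u _. unfold PN, Qb. destruct Rle_dec, Rle_dec; auto; exfalso.
    + apply n. apply (Rmult_le_reg_l (5 ^ N * (powerRZ 5 m))). nra.
      replace (5 ^ N * (powerRZ 5 m) * (x / powerRZ 5 m / 5 ^ N)) with x by (field; lra). auto.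
    + apply n. apply (Rmult_le_reg_l (/ (5 ^ N * (powerRZ 5 m)))). apply Rinv_0_lt_compat; nra.
      replace (/ (5 ^ N * (powerRZ 5 m)) * (5 ^ N * (powerRZ 5 m) * Psi u)) with (Psi u) by (field; lra).
      replace (/ (5 ^ N * (powerRZ 5 m)) * x) with (x / powerRZ 5 m / 5 ^ N) by (field; lra). auto. Qed.



Theorem proposition5p3 (m0 : Z) (lam0 : R)
  (Hlam0 : lam0 = 2 \/ lam0 = 5 \/ lam0 = 6) :
  (forall x, 0 < x -> exists n, count_is m0 lam0 x n) /\
  exists g : R -> R,
    continuity g /\ (forall t, g (t + ln 5) = g t) /\
    forall eps, 0 < eps -> exists M, forall x, M < x ->
      Rabs (rho m0 lam0 x / Rpower x (ln 2 / ln 5) - g (ln x)) < eps.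
Proof.
  assert (HB : exists b0 m, I5 b0 /\ forall e, lambda_e m0 lam0 e =
            powerRZ 5 (Z.of_nat (length e) + m) * Psi (psi_seq e b0)).
  { destruct (Req_EM_T lam0 6) as [E|E].
    - exists 3, (m0 + 1)%Z. split. unfold I5; lra. intros e. unfold lambda_e.
      destruct Req_EM_T; [|contradiction]. rewrite Z.add_assoc. reflexivity.
    - exists lam0, m0. split. unfold I5; lra. intros e. unfold lambda_e.
      destruct Req_EM_T; [contradiction|]. reflexivity. }
  destruct HB as [b0 [m [Hb Hl]]].
  split.
  { intros x _. destruct (K_ex m0 lam0 b0 m Hb Hl x) as [K HK]. eexists. apply count_at; eauto. }
  set (c := powerRZ 5 m).
  assert (Hc : 0 < c) by (apply powerRZ_lt; lra).
  set (d := ln 2 / ln 5).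
  assert (l2 : 0 < ln 2) by (rewrite <- ln_1; apply ln_increasing; lra).
  assert (l5 : 0 < ln 5) by (rewrite <- ln_1; apply ln_increasing; lra).
  assert (Hd : 0 < d) by (apply Rdiv_lt_0_compat; lra).
  assert (dl5 : d * ln 5 = ln 2) by (unfold d; field; lra).
  exists (fun t => exp (- (d * t)) * Gt b0 (exp t / c)). split; [|split].
  - intros t. apply continuity_pt_mult with (f1 := fun t => exp (- (d * t))) (f2 := fun t => Gt b0 (exp t / c)).
    + apply continuity_pt_comp with (f1 := fun t => - (d * t)) (f2 := exp).
      * apply continuity_pt_opp with (f := fun t => d * t).
        apply continuity_pt_mult with (f1 := fun _ => d) (f2 := id).
        apply continuity_pt_const; intros ? ?; auto.
        apply derivable_continuous_pt, derivable_pt_id.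
      * apply derivable_continuous_pt, derivable_pt_exp.
    + apply continuity_pt_comp with (f1 := fun t => exp t / c) (f2 := Gt b0).
      * apply continuity_pt_mult with (f1 := exp) (f2 := fun _ => / c).
        apply derivable_continuous_pt, derivable_pt_exp.
        apply continuity_pt_const; intros ? ?; auto.
      * apply Gt_cont; auto.
  - intros t. cbv beta. rewrite (exp_plus t (ln 5)), (exp_ln 5) by lra.
    replace (exp t * 5 / c) with (5 * (exp t / c)) by (field; lra). rewrite Gt_5 by auto.
    replace (- (d * (t + ln 5))) with (- (d * t) + - ln 2) by lra.
    rewrite exp_plus, (exp_Ropp (ln 2)), (exp_ln 2) by lra. field.
  - intros eps He. exists (exp (ln (2 / eps) / d)). intros x Hx.
    assert (Hx0 : 0 < x) by (pose proof (exp_pos (ln (2 / eps) / d)); lra).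
    pose proof (rho_close m0 lam0 b0 m Hb Hl x) as H. fold c in H.
    unfold Rpower. rewrite exp_ln by lra. fold d.
    assert (Hlx : ln (2 / eps) / d < ln x).
    { rewrite <- (ln_exp (ln (2 / eps) / d)). apply ln_increasing; auto. apply exp_pos. }
    assert (Hdl : ln (2 / eps) < d * ln x).
    { apply (Rmult_lt_compat_l d) in Hlx; auto. replace (d * (ln (2 / eps) / d)) with (ln (2/eps)) in Hlx by (field; lra). lra. }
    assert (He2 : 2 / eps < exp (d * ln x)).
    { rewrite <- (exp_ln (2 / eps)) by (apply Rdiv_lt_0_compat; lra). apply exp_increasing; auto. }
    set (E := exp (d * ln x)) in *. assert (HE : 0 < E) by apply exp_pos.
    rewrite exp_Ropp. fold E.
    replace (rho m0 lam0 x / E - / E * Gt b0 (x / c)) with ((rho m0 lam0 x - Gt b0 (x / c)) * / E) by (field; lra).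
    rewrite Rabs_mult, (Rabs_right (/ E)) by (left; apply Rinv_0_lt_compat; lra).
    apply (Rmult_lt_reg_r E); auto. rewrite Rmult_assoc, Rinv_l by lra.
    assert (2 < eps * E).
    { apply (Rmult_lt_compat_l eps) in He2; auto. replace (eps * (2 / eps)) with 2 in He2 by (field; lra). lra. }
    lra.
Qed.
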